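(* Let $\mathfrak u(n)$ be the real vector space of skew-Hermitian $n\times n$ complex matrices with the Frobenius inner product $\langle a,b\rangle=\operatorname{Re}\operatorname{tr}(a^\dagger b)$ and norm $\|\cdot\|$, and let $g$ be a vector field on $\mathfrak u(n)$. For $z\in\mathfrak u(n)$ with distinct nonzero eigenvalues, write uniquely $g(z)=[L,z]+Pz$ with $L$ in the range of $K\mapsto[K,z]$ and $P$ commuting with $z$ (then $L$ is skew-Hermitian and $P$ Hermitian), write $L(z),P(z)$ for these, and set $M(z):=-L(z)+\tfrac12P(z)$ (so $M(z)^\dagger=L(z)+\tfrac12P(z)$ and $g(z)=M(z)^\dagger z+zM(z)$). Let $b_1,\dots,b_s$, $h>0$, and $z_0,z_1,Z_1,\dots,Z_s\in\mathfrak u(n)$, each $Z_i$ having distinct nonzero eigenvalues, satisfy \[ Z_i = z_0 + h\sum_{j=1}^{i-1}b_jg(Z_j) + \frac h2 b_ig(Z_i) - \frac{h^2}{4}b_i^2M(Z_i)^\dagger Z_iM(Z_i),\qquad z_1 = z_0 + h\sum_{i=1}^s b_ig(Z_i). \] Then \[ \tfrac12\|z_1\|^2 = \tfrac12\|z_0\|^2 - h\sum_{i=1}^s b_i\operatorname{tr}\bigl(Z_iP(Z_i)Z_i\bigr) - \frac{h^3}{4}\sum_{i=1}^s b_i^3\operatorname{tr}\bigl(M(Z_i)^\dagger Z_iP(Z_i)Z_iM(Z_i)\bigr). \] In particular, when $g(z)=[M(z)^\dagger,z]$, so that $P=0$, the Frobenius norm is conserved: $\|z_1\|=\|z_0\|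$.
   Context: $A^\dagger$ denotes the conjugate transpose; $[A,B]=AB-BA$. For $z$ with distinct nonzero eigenvalues, every matrix $K$ decomposes uniquely as $K=[L,z]+Pz$ with $L$ in the range of $X\mapsto[X,z]$ and $P$ in its kernel (matrices commuting with $z$); in the eigenbasis of $z$ this is the splitting of $K$ into off-diagonal and diagonal parts. *)

(* Defs.v *)
(* Complex scalars: an arbitrary numClosedFieldType C
   (e.g. the complex numbers R[i]); the statement is purely algebraic. *)
From mathcomp Require Import all_boot all_order all_algebra.
Set Implicit Arguments. Unset Strict Implicit. Unset Printing Implicit Defensive.
Import Order.TTheory GRing.Theory Num.Theory.
Local Open Scope ring_scope.

Section Defs.
Variables (C : numClosedFieldType) (n : nat).

Definition dag (A : 'M[C]_n) : 'M[C]_n := (map_mx Num.conj A)^T.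

Definition skew_herm (A : 'M[C]_n) : Prop := dag A = - A.

Definition comm (A B : 'M[C]_n) : 'M[C]_n := A *m B - B *m A.

Definition frob_inner (a b : 'M[C]_n) : C := 'Re (\tr (dag a *m b)).
Definition frob_norm (a : 'M[C]_n) : C := sqrtC (frob_inner a a).

Definition distinct_nonzero_eigs (z : 'M[C]_n) : Prop :=
  exists e : 'I_n -> C, injective e /\ forall i, eigenvalue z (e i) /\ e i != 0.

(* L, P realise the decomposition g(z) = [L,z] + P z with L in the range of
   K |-> [K,z] and P commuting with z, at every z in u(n) with distinct
   nonzero eigenvalues (this decomposition is unique, so L, P are L(z), P(z)). *)
Definition LP_decomp (g L P : 'M[C]_n -> 'M[C]_n) : Prop :=
  forall z, skew_herm z -> distinct_nonzero_eigs z ->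
    [/\ g z = comm (L z) z + P z *m z,
        exists K, L z = comm K z &
        P z *m z = z *m P z].

Definition Mof (L P : 'M[C]_n -> 'M[C]_n) (z : 'M[C]_n) : 'M[C]_n :=
  - L z + 2^-1 *: P z.
End Defs.

(* Main.v *)
Require Import Defs.
From mathcomp Require Import all_boot all_order all_algebra.
From mathcomp Require Import ring.
Import Order.TTheory GRing.Theory Num.Theory.
Local Open Scope ring_scope.
Set Implicit Arguments.
Section Helpers.
Variables (C : numClosedFieldType) (n : nat).
Implicit Types A B X Y Z : 'M[C]_n.

Lemma dagM A B : dag (A *m B) = dag B *m dag A.
Proof. by rewrite /dag map_mxM trmx_mul. Qed.
Lemma dagD A B : dag (A + B) = dag A + dag B.
Proof. by rewrite /dag map_mxD linearD. Qed.
Lemma dagN A : dag (- A) = - dag A.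
Proof. by rewrite /dag map_mxN linearN. Qed.
Lemma dagB A B : dag (A - B) = dag A - dag B.
Proof. by rewrite dagD dagN. Qed.
Lemma dagZ a A : dag (a *: A) = a^* *: dag A.
Proof. by rewrite /dag map_mxZ linearZ. Qed.
Lemma dagK A : dag (dag A) = A.
Proof. by apply/matrixP=> i j; rewrite /dag !mxE conjCK. Qed.
Lemma tr_dag A : \tr (dag A) = (\tr A)^*.
Proof. by rewrite /dag mxtrace_tr trace_map_mx. Qed.
Lemma herm_tr_real A : dag A = A -> \tr A \is Num.real.
Proof. by move=> H; apply/CrealP; rewrite -tr_dag H. Qed.

Lemma trdag_eq0 Y : \tr (dag Y *m Y) = 0 -> Y = 0.
Proof.
have E : \tr (dag Y *m Y) = \sum_i \sum_k `|Y k i| ^+ 2.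
  rewrite /mxtrace; apply: eq_bigr => i _; rewrite mxE; apply: eq_bigr => k _.
  by rewrite /dag !mxE normCKC.
rewrite E => H; apply/matrixP => k i; rewrite mxE.
have H1 : \sum_k `|Y k i| ^+ 2 = 0.
  by apply: (psumr_eq0P _ H) => // j _; apply: sumr_ge0 => l _; exact: exprn_ge0.
have H2 : `|Y k i| ^+ 2 = 0.
  by apply: (psumr_eq0P _ H1) => // j _; exact: exprn_ge0.
by move/eqP: H2; rewrite sqrf_eq0 normr_eq0 => /eqP.
Qed.

Lemma ortho X Z Cm : dag Z = -Z -> Cm *m Z = Z *m Cm -> \tr (dag (comm X Z) *m Cm) = 0.
Proof.
move=> hZ hC; rewrite /comm dagB !dagM hZ mulNmx mulmxN mulmxBl !mulNmx raddfB /= !raddfN /=.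
apply/eqP; rewrite opprK addrC subr_eq0 -[Z *m _ *m _]mulmxA (mxtrace_mulC Z) -!mulmxA hC.
by []. Qed.

Lemma mxEadd A B i j : (A + B) i j = A i j + B i j. Proof. by rewrite mxE. Qed.
Lemma mxEopp A i j : (- A) i j = - A i j. Proof. by rewrite mxE. Qed.
Lemma mxEscale a A i j : (a *: A) i j = a * A i j. Proof. by rewrite mxE. Qed.
Lemma mxE0 i j : (0 : 'M[C]_n) i j = 0. Proof. by rewrite mxE. Qed.

Ltac mxab := apply/matrixP => ? ?; rewrite !(mxEadd, mxEopp, mxEscale, mxE0); ring.

Lemma key Z L0 P0 K : dag Z = -Z ->
  dag (comm L0 Z + P0 *m Z) = -(comm L0 Z + P0 *m Z) ->
  L0 = comm K Z -> P0 *m Z = Z *m P0 ->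
  [/\ dag L0 = - L0, dag P0 *m Z = P0 *m Z & dag P0 *m Z = Z *m dag P0].
Proof.
move=> hZ hg hL hP.
have hP' : dag P0 *m Z = Z *m dag P0.
  have := congr1 (@dag C n) hP; rewrite !dagM hZ mulmxN mulNmx => /eqP.
  by rewrite eqr_opp => /eqP ->.
have hdL : dag L0 = comm (dag K) Z.
  rewrite hL /comm dagB !dagM hZ mulmxN mulNmx; mxab.
have hdg : dag (comm L0 Z + P0 *m Z) = comm (dag L0) Z - dag P0 *m Z.
  rewrite dagD /comm dagB !dagM hZ !mulmxN !mulNmx -hP'; mxab.
set A := L0 + dag L0; set B := P0 - dag P0.
have hAB : comm A Z + B *m Z = 0.
  have e : comm A Z + B *m Z = dag (comm L0 Z + P0 *m Z) + (comm L0 Z + P0 *m Z).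
    rewrite hdg /A /B /comm !mulmxDl !mulmxDr ?mulNmx ?mulmxN; mxab.
  by rewrite e hg addNr.
have hY : comm A Z = - (B *m Z) by apply/eqP; rewrite -addr_eq0 hAB.
have hB : B *m Z = Z *m B by rewrite /B mulmxBl mulmxBr hP hP'.
have hYc : comm A Z *m Z = Z *m comm A Z.
  by rewrite hY mulNmx mulmxN hB -mulmxA -hB mulmxA.
have Y0 : comm A Z = 0 by apply: trdag_eq0; exact: ortho hZ hYc.
have hA : A *m Z = Z *m A by apply/eqP; rewrite -subr_eq0; apply/eqP; exact: Y0.
have eA : A = comm (K + dag K) Z by rewrite /A hdL hL /comm mulmxDl mulmxDr; mxab.
have A0 : A = 0 by apply: trdag_eq0; rewrite {1}eA; exact: ortho hZ hA.
split => //.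
  by apply/eqP; rewrite -addr_eq0 addrC; apply/eqP; exact: A0.
have : B *m Z = 0 by apply/eqP; rewrite -oppr_eq0 -hY Y0.
by rewrite /B mulmxBl => /eqP; rewrite subr_eq0 => /eqP ->.
Qed.

Lemma conj_half : (2^-1 : C)^* = 2^-1.
Proof. by rewrite fmorphV rmorph_nat. Qed.

Lemma two_neq0 : (2 : C) != 0.
Proof. by rewrite pnatr_eq0. Qed.

Ltac mxabf := apply/matrixP => ? ?; rewrite !(mxEadd, mxEopp, mxEscale, mxE0); field; try done; exact: two_neq0.

Lemma Mfacts Z L0 P0 : dag Z = -Z -> dag L0 = -L0 -> dag P0 *m Z = P0 *m Z ->
  dag P0 *m Z = Z *m dag P0 -> P0 *m Z = Z *m P0 ->
  let M := -L0 + 2^-1 *: P0 in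
  [/\ comm L0 Z + P0 *m Z = dag M *m Z + Z *m M,
     (M + dag M) *m Z = P0 *m Z,
     Z *m (M + dag M) = P0 *m Z,
     dag (Z *m P0 *m Z) = Z *m P0 *m Z &
     dag (dag M *m Z *m P0 *m Z *m M) = dag M *m Z *m P0 *m Z *m M].
Proof.
move=> hZ hdL hPd hPc' hPc M.
have hdM : dag M = L0 + 2^-1 *: dag P0 by rewrite /M dagD dagN dagZ hdL conj_half opprK.
have hMM : M + dag M = 2^-1 *: P0 + 2^-1 *: dag P0 by rewrite hdM /M; mxab.
split.
- rewrite hdM /M /comm !mulmxDl !mulmxDr -!scalemxAl -!scalemxAr hPd -hPc !mulmxN ?mulNmx; apply/matrixP => ? ?; rewrite !(mxEadd, mxEopp, mxEscale, mxE0); field; try done; exact: two_neq0.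
- rewrite hMM mulmxDl -!scalemxAl hPd; mxabf.
- rewrite hMM mulmxDr -!scalemxAr -hPc -hPc' hPd; mxabf.
- by rewrite !dagM hZ mulmxN mulNmx mulmxN opprK hPd mulmxA.
- by rewrite !dagM dagK hZ !mulNmx !mulmxN opprK (mulmxA (dag P0)) hPd !mulmxA.
Qed.

Lemma trZG Z L0 P0 : \tr (Z *m (comm L0 Z + P0 *m Z)) = \tr (Z *m P0 *m Z).
Proof.
rewrite /comm !mulmxDr mulmxN !raddfD raddfN /= mulmxA (mxtrace_mulC (Z *m L0)).
by rewrite subrr add0r mulmxA.
Qed.

Lemma trWG Z M P0 : (M + dag M) *m Z = P0 *m Z ->
  \tr (dag M *m Z *m M *m (dag M *m Z + Z *m M)) = \tr (dag M *m Z *m P0 *m Z *m M).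
Proof.
move=> hM.
rewrite -(mulmxA (dag M *m Z) P0 Z) -hM !(mulmxDl, mulmxDr) !raddfD /= -!mulmxA addrC.
congr (_ + _).
rewrite mulmxA mxtrace_mulC !mulmxA [RHS]mxtrace_mulC !mulmxA //.
Qed.
End Helpers.

Unset Implicit Arguments.
Lemma dsum (R : comRingType) s (f : 'I_s -> 'I_s -> R) : (forall i j, f i j = f j i) ->
 \sum_(i < s) \sum_(j < s) f i j =
   2 * \sum_(i < s) \sum_(j < s | (j < i)%N) f j i + \sum_(i < s) f i i.
Proof.
move=> fs.
have sp : forall i, \sum_(j < s) f i j =
   \sum_(j < s | (j < i)%N) f j i + f i i + \sum_(j < s | (i < j)%N) f i j.
  move=> i; rewrite (bigID (fun j : 'I_s => (j < i)%N)) /= [X in _ + X](bigD1 i) /=; last by rewrite ltnn.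
  rewrite addrA; congr (_ + _ + _); first by apply: eq_bigr => j _; rewrite fs.
  apply: eq_bigl => j; rewrite -leqNgt andbC eq_sym ltn_neqAle //.
rewrite (eq_bigr _ (fun i _ => sp i)) !big_split /=.
rewrite (exchange_big_dep xpredT) //=.
ring.
Qed.

Theorem proposition4p4 (C : numClosedFieldType) (n s : nat)
  (g L P : 'M[C]_n -> 'M[C]_n)
  (b : 'I_s -> C) (h : C) (z0 z1 : 'M[C]_n) (Z : 'I_s -> 'M[C]_n) :
  (forall z, skew_herm z -> skew_herm (g z)) ->
  LP_decomp g L P ->
  (forall i, b i \is Num.real) -> 0 < h ->
  skew_herm z0 -> skew_herm z1 ->
  (forall i, skew_herm (Z i) /\ distinct_nonzero_eigs (Z i)) ->
  (forall i : 'I_s,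
     Z i = z0 + h *: (\sum_(j < s | (j < i)%N) b j *: g (Z j))
              + (h / 2 * b i) *: g (Z i)
              - (h ^+ 2 / 4 * b i ^+ 2) *:
                  (dag (Mof L P (Z i)) *m Z i *m Mof L P (Z i))) ->
  z1 = z0 + h *: (\sum_(i < s) b i *: g (Z i)) ->
  (frob_norm z1 ^+ 2 / 2 =
     frob_norm z0 ^+ 2 / 2
     - h * (\sum_(i < s) b i * \tr (Z i *m P (Z i) *m Z i))
     - h ^+ 3 / 4 * (\sum_(i < s) b i ^+ 3 *
          \tr (dag (Mof L P (Z i)) *m Z i *m P (Z i) *m Z i *m Mof L P (Z i))))
  /\ ((forall i, g (Z i) = comm (dag (Mof L P (Z i))) (Z i)) ->
      frob_norm z1 = frob_norm z0).
Proof.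
move=> gskew hLP breal hpos hz0 hz1 hZ HZ Hz1.
have facts : forall i, [/\ g (Z i) = dag (Mof L P (Z i)) *m Z i + Z i *m Mof L P (Z i),
     (Mof L P (Z i) + dag (Mof L P (Z i))) *m Z i = P (Z i) *m Z i,
     Z i *m (Mof L P (Z i) + dag (Mof L P (Z i))) = P (Z i) *m Z i,
     dag (Z i *m P (Z i) *m Z i) = Z i *m P (Z i) *m Z i &
     dag (dag (Mof L P (Z i)) *m Z i *m P (Z i) *m Z i *m Mof L P (Z i)) =
       dag (Mof L P (Z i)) *m Z i *m P (Z i) *m Z i *m Mof L P (Z i)].
  move=> i; case: (hZ i) => hs hd; case: (hLP _ hs hd) => hg [K hK] hc.
  have hsg := gskew _ hs; rewrite /skew_herm hg in hsg.
  case: (key hs hsg hK hc) => hdL hPd hPc'.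
  case: (Mfacts hs hdL hPd hPc' hc) => e1 e2 e3 e4 e5.
  by split => //; rewrite hg; exact: e1.
have trZG' : forall i, \tr (Z i *m g (Z i)) = \tr (Z i *m P (Z i) *m Z i).
  move=> i; case: (hZ i) => hs hd; case: (hLP _ hs hd) => hg _ _.
  by rewrite hg trZG.
have trWG' : forall i, \tr (dag (Mof L P (Z i)) *m Z i *m Mof L P (Z i) *m g (Z i)) =
    \tr (dag (Mof L P (Z i)) *m Z i *m P (Z i) *m Z i *m Mof L P (Z i)).
  by move=> i; case: (facts i) => e1 e2 _ _ _; rewrite e1 (trWG e2).
have frob : forall z : 'M[C]_n, skew_herm z -> frob_norm z ^+ 2 = - \tr (z *m z).
  move=> z hz; rewrite /frob_norm sqrtCK /frob_inner hz mulNmx raddfN /=.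
  apply/Creal_ReP; rewrite rpredN; apply: herm_tr_real.
  by rewrite dagM hz mulmxN mulNmx opprK.
have E4 : forall i, \tr (z0 *m g (Z i)) = \tr (Z i *m g (Z i))
   - h * \sum_(j < s | (j < i)%N) b j * \tr (g (Z j) *m g (Z i))
   - h / 2 * b i * \tr (g (Z i) *m g (Z i))
   + h ^+ 2 / 4 * b i ^+ 2 * \tr (dag (Mof L P (Z i)) *m Z i *m Mof L P (Z i) *m g (Z i)).
  move=> i.
  have d : Z i - z0 = h *: (\sum_(j < s | (j < i)%N) b j *: g (Z j))
     + ((h / 2 * b i) *: g (Z i) - (h ^+ 2 / 4 * b i ^+ 2) *:
                  (dag (Mof L P (Z i)) *m Z i *m Mof L P (Z i))).
    by rewrite {1}(HZ i) -(addrA (z0 + _)) -(addrA z0) (addrC z0) addrK.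
  have ez0 : z0 = Z i - (Z i - z0) by rewrite opprB addrC subrK.
  rewrite {1}ez0 d mulmxBl !mulmxDl mulNmx -!scalemxAl raddfB !raddfD raddfN /= !mxtraceZ.
  rewrite mulmx_suml raddf_sum /=.
  under eq_bigr do rewrite -scalemxAl mxtraceZ.
  ring.
pose S := \sum_(i < s) b i *: g (Z i).
have E1 : \tr (z1 *m z1) = \tr (z0 *m z0) + 2 * h * \tr (z0 *m S) + h ^+ 2 * \tr (S *m S).
  rewrite Hz1 -/S !mulmxDl !mulmxDr -!scalemxAl -!scalemxAr !raddfD /= !mxtraceZ.
  rewrite (mxtrace_mulC S z0); ring.
have E2 : \tr (z0 *m S) = \sum_(i < s) b i * \tr (z0 *m g (Z i)).
  by rewrite mulmx_sumr raddf_sum; apply: eq_bigr => i _ /=; rewrite -scalemxAr mxtraceZ.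
have E3 : \tr (S *m S) = \sum_(i < s) \sum_(j < s) b i * \tr (g (Z i) *m g (Z j)) * b j.
  rewrite mulmx_suml raddf_sum; apply: eq_bigr => i _ /=.
  rewrite -scalemxAl mxtraceZ mulmx_sumr raddf_sum mulr_sumr; apply: eq_bigr => j _ /=.
  rewrite -scalemxAr mxtraceZ; ring.
have DS := @dsum C s (fun i j => b i * \tr (g (Z i) *m g (Z j)) * b j)
  (fun i j => ltac:(rewrite /= mxtrace_mulC; ring)).
have key2 : \sum_(i < s) b i * \tr (z0 *m g (Z i)) =
   \sum_(i < s) b i * \tr (Z i *m P (Z i) *m Z i)
   - h * \sum_(i < s) \sum_(j < s | (j < i)%N) b j * \tr (g (Z j) *m g (Z i)) * b i
   - h / 2 * \sum_(i < s) b i * \tr (g (Z i) *m g (Z i)) * b i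
   + h ^+ 2 / 4 * \sum_(i < s) b i ^+ 3 *
          \tr (dag (Mof L P (Z i)) *m Z i *m P (Z i) *m Z i *m Mof L P (Z i)).
  rewrite !mulr_sumr -!sumrB -big_split /=; apply: eq_bigr => i _.
  rewrite E4 trZG' trWG' -mulr_suml; ring.
have H1 : frob_norm z1 ^+ 2 / 2 =
     frob_norm z0 ^+ 2 / 2
     - h * (\sum_(i < s) b i * \tr (Z i *m P (Z i) *m Z i))
     - h ^+ 3 / 4 * (\sum_(i < s) b i ^+ 3 *
          \tr (dag (Mof L P (Z i)) *m Z i *m P (Z i) *m Z i *m Mof L P (Z i))).
  rewrite (frob _ hz1) (frob _ hz0) E1 E2 key2 E3 DS.
  by field.
split => // hg'.
have P0 : forall i, P (Z i) *m Z i = 0.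
  move=> i; case: (facts i) => e1 _ e3 _ _.
  have : dag (Mof L P (Z i)) *m Z i + Z i *m Mof L P (Z i) =
         dag (Mof L P (Z i)) *m Z i + - (Z i *m dag (Mof L P (Z i))) by rewrite -e1 hg'.
  by move/addrI => hh; rewrite -e3 mulmxDr hh addNr.
have S1 : \sum_(i < s) b i * \tr (Z i *m P (Z i) *m Z i) = 0.
  by apply: big1 => i _; rewrite -mulmxA P0 mulmx0 mxtrace0 mulr0.
have S2 : \sum_(i < s) b i ^+ 3 *
          \tr (dag (Mof L P (Z i)) *m Z i *m P (Z i) *m Z i *m Mof L P (Z i)) = 0.
  by apply: big1 => i _; rewrite -(mulmxA _ (P (Z i)) (Z i)) P0 mulmx0 mul0mx mxtrace0 mulr0.
move: H1; rewrite S1 S2 !mulr0 !subr0 => /(congr1 (fun x => x * 2)).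
rewrite !divfK ?two_neq0 // /frob_norm => eq2.
congr sqrtC; by rewrite -(sqrtCK (frob_inner z1 z1)) eq2 sqrtCK.
Qed.
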